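(* Let $P\in\mathbb{R}^{p_1\times q_1}_+$, $Q\in\mathbb{R}^{p_2\times q_1}_+$, $R\in\mathbb{R}^{p_2\times q_2}_+$ be nonnegative matrices and let \[ M=\begin{bmatrix} P & 0\\ Q & R\end{bmatrix}\in\mathbb{R}^{(p_1+p_2)\times(q_1+q_2)}_+. \] Then $\operatorname{rank}_{\mathrm{psd}}(M)\ge\operatorname{rank}_{\mathrm{psd}}(P)+\operatorname{rank}_{\mathrm{psd}}(R)$. Moreover, if $Q=0$ then equality holds.
   Context: $\mathcal{S}^k_+$ denotes the cone of $k\times k$ real symmetric positive semidefinite matrices, with inner product $\langle A,B\rangle = \operatorname{trace}(AB)$. A psd factorization of size $k$ of a nonnegative matrix $M\in\mathbb{R}^{p\times q}_+$ is a collection $A_1,\dots,A_p, B_1,\dots,B_q \in \mathcal{S}^k_+$ with $M_{ij} = \langle A_i, B_j\rangle$ for all $i,j$; the psd rank $\operatorname{rank}_{\mathrm{psd}}(M)$ is the smallest $k$ for which such a factorization exists. *)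

(* Defs.v *)
From HB Require Import structures.
From mathcomp Require Import all_boot all_order all_algebra.
Set Implicit Arguments. Unset Strict Implicit. Unset Printing Implicit Defensive.
Import Order.TTheory GRing.Theory Num.Theory.
Local Open Scope ring_scope.

Definition psd (R : rcfType) (k : nat) (A : 'M[R]_k) : Prop :=
  A^T = A /\ forall x : 'cV[R]_k, 0 <= (x^T *m A *m x) 0 0.

Definition nonneg_mx (R : rcfType) (p q : nat) (M : 'M[R]_(p, q)) : Prop :=
  forall i j, 0 <= M i j.

Definition has_psd_fact (R : rcfType) (p q : nat) (M : 'M[R]_(p, q)) (k : nat) : Prop :=
  exists (A : 'I_p -> 'M[R]_k) (B : 'I_q -> 'M[R]_k),
    (forall i, psd (A i)) /\ (forall j, psd (B j)) /\
    (forall i j, M i j = \tr (A i *m B j)).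

Definition is_psd_rank (R : rcfType) (p q : nat) (M : 'M[R]_(p, q)) (k : nat) : Prop :=
  has_psd_fact M k /\ forall k', has_psd_fact M k' -> (k <= k')%N.

(* Main.v *)
Require Import Defs.
From HB Require Import structures.
From mathcomp Require Import all_boot all_order all_algebra.
From mathcomp Require Import ring lra zify.
Set Implicit Arguments. Unset Strict Implicit. Unset Printing Implicit Defensive.
Import Order.TTheory GRing.Theory Num.Theory.
Local Open Scope ring_scope.

Section PSD.
Variable F : rcfType.

Definition bf k (A : 'M[F]_k) (x y : 'cV[F]_k) : F := (x^T *m A *m y) 0 0.

Lemma bf_sym k (A : 'M[F]_k) x y : A^T = A -> bf A x y = bf A y x.
Proof.
move=> hA; rewrite /bf -[in LHS](trmxK (x^T *m A *m y)) mxE.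
by rewrite !trmx_mul trmxK hA mulmxA.
Qed.

Lemma bf_expand k (A : 'M[F]_k) x y t : A^T = A ->
  bf A (x + t *: y) (x + t *: y) = bf A x x + 2 * t * bf A x y + t ^+ 2 * bf A y y.
Proof.
move=> hA; have hs := bf_sym x y hA; rewrite /bf.
have -> : (x + t *: y)^T = x^T + t *: y^T by apply/matrixP=> i j; rewrite !mxE.
rewrite /bf !mulmxDl !mulmxDr -!scalemxAl -!scalemxAr !mxE.
rewrite /bf !mxE in hs; rewrite hs; ring.
Qed.

Lemma psd_ker k (A : 'M[F]_k) x : psd A -> bf A x x = 0 -> A *m x = 0.
Proof.
move=> [hA hq] h0.
have hb : forall y, bf A y x = 0.
  move=> y; set b := bf A y x; set d := bf A y y.
  have H : forall t, 0 <= d + 2 * t * b.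
    move=> t; have := hq (y + t *: x); rewrite -/(bf _ _ _) bf_expand // h0.
    by rewrite -/d -/b mulr0 addr0.
  apply/eqP; apply/negPn/negP => bn0.
  have := H (- (d + 1) / (2 * b)).
  have -> : 2 * (- (d + 1) / (2 * b)) * b = - (d + 1) by field; rewrite bn0.
  lra.
apply/matrixP => i j; rewrite (ord1 j) [RHS]mxE.
have := hb (delta_mx i 0); rewrite /bf trmx_delta -mulmxA -rowE mxE => ->.
done.
Qed.

Lemma psd_cs k (A : 'M[F]_k) x e : psd A -> 0 < bf A e e ->
  bf A x e ^+ 2 <= bf A x x * bf A e e.
Proof.
move=> [hA hq] hc; set a := bf A x x; set b := bf A x e; set c := bf A e e.
have := hq (x + (- b / c) *: e); rewrite -/(bf _ _ _) bf_expand // -/a -/b -/c.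
have hc0 : c != 0 by rewrite gt_eqF.
have -> : a + 2 * (- b / c) * b + (- b / c) ^+ 2 * c = (a * c - b ^+ 2) / c.
  by field.
by rewrite pmulr_lge0 ?invr_gt0 // subr_ge0.
Qed.

Lemma psd_pos k (B : 'M[F]_k) : psd B -> B != 0 -> exists e, 0 < bf B e e.
Proof.
move=> hB hB0.
have : ~~ [forall j : 'I_k, B *m delta_mx j (0 : 'I_1) == 0].
  apply: contra hB0 => /forallP hj; apply/eqP/matrixP => i j.
  have := hj j; rewrite -colE => /eqP/matrixP/(_ i 0).
  by rewrite !mxE.
rewrite negb_forall => /existsP [j hj]; exists (delta_mx j 0); rewrite lt_def.
have hB' := hB; case: hB' => _ ->; rewrite andbT.
by apply: contra hj => /eqP h; apply/eqP; exact: psd_ker.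
Qed.

Lemma mx11_mul (u v : 'M[F]_1) : (u *m v) 0 0 = u 0 0 * v 0 0.
Proof. by rewrite mxE big_ord1. Qed.

Lemma entryB m n (X Y : 'M[F]_(m,n)) i j : (X - Y) i j = X i j - Y i j.
Proof. by rewrite !mxE. Qed.
Lemma entryD m n (X Y : 'M[F]_(m,n)) i j : (X + Y) i j = X i j + Y i j.
Proof. by rewrite !mxE. Qed.
Lemma entryZ m n a (X : 'M[F]_(m,n)) i j : (a *: X) i j = a * X i j.
Proof. by rewrite !mxE. Qed.

Lemma tr00 (u : 'M[F]_1) : u^T 0 0 = u 0 0.
Proof. by rewrite mxE. Qed.

Lemma psd_step k (B : 'M[F]_k) e : psd B -> 0 < bf B e e ->
  psd (B - (bf B e e)^-1 *: ((B *m e) *m (B *m e)^T)) /\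
  ltn (\rank (B - (bf B e e)^-1 *: ((B *m e) *m (B *m e)^T))) (\rank B).
Proof.
move=> hB hc; have [hs hq] := hB.
set c := bf B e e; set w := B *m e; set B' := B - _.
have hc0 : c != 0 by rewrite gt_eqF.
have hwe : w^T *m e = c%:M.
  by rewrite [LHS]mx11_scalar /w trmx_mul hs.
have hB'e : B' *m e = 0.
  by rewrite /B' mulmxBl -scalemxAl -mulmxA hwe mul_mx_scalar scalerA mulVf // scale1r subrr.
split.
  split.
    rewrite /B' linearB /= linearZ /= hs trmx_mul trmxK //.
  move=> x; rewrite /B' mulmxBr mulmxBl -scalemxAr -scalemxAl.
  rewrite entryB entryZ.
  rewrite !mulmxA -[_ *m w^T *m x]mulmxA mx11_mul.
  have -> : (w^T *m x) 0 0 = (x^T *m w) 0 0.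
    by rewrite -tr00 trmx_mul trmxK.
  rewrite -/(bf B x x) -/(bf B x e).
  have := psd_cs x hB hc; rewrite -/c => h.
  rewrite /w mulmxA -/(bf B x e) -expr2 mulrC -/(_ / _) subr_ge0 ler_pdivrMr //.
apply: rank_ltmx; rewrite ltmxE; apply/andP; split.
  rewrite /B' addmx_sub ?submx_refl // eqmx_opp scalemx_sub //.
  by rewrite {2}/w trmx_mul hs mulmxA submxMl.
apply/negP => /submxP [D hD].
have : B *m e = 0 by rewrite hD -mulmxA hB'e mulmx0.
move=> hBe; move: hc; rewrite /c /bf -mulmxA hBe mulmx0 mxE ltxx //.
Qed.

Lemma tr11 (u : 'M[F]_1) : \tr u = u 0 0.
Proof. by rewrite /mxtrace big_ord1. Qed.

Lemma psd_tr_aux n k (B : 'M[F]_k) : (\rank B <= n)%N -> psd B ->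
  forall A, psd A -> 0 <= \tr (A *m B) /\ (\tr (A *m B) = 0 -> A *m B = 0).
Proof.
elim: n B => [|n IH] B hr hB A hA.
  move: hr; rewrite leqn0 mxrank_eq0 => /eqP ->.
  by rewrite mulmx0 mxtrace0.
have [->|hB0] := eqVneq B 0; first by rewrite mulmx0 mxtrace0.
have [e he] := psd_pos hB hB0.
have [hB' hlt] := psd_step hB he.
set c := bf B e e in he hB' hlt; set w := B *m e in hB' hlt.
set B' := B - _ in hB' hlt.
have hBB : B = B' + c^-1 *: (w *m w^T) by rewrite /B' subrK.
have [h1 h2] := IH B' (leq_trans hlt hr) hB' A hA.
have hw : \tr (A *m (w *m w^T)) = bf A w w.
  by rewrite mulmxA mxtrace_mulC mulmxA tr11.
have hq : 0 <= bf A w w by case: hA => _ ->.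
have hci : 0 < c^-1 by rewrite invr_gt0.
rewrite hBB mulmxDr -scalemxAr mxtraceD mxtraceZ hw.
split; first by rewrite addr_ge0 // mulr_ge0 // ltW.
move=> h0.
have hz1 : \tr (A *m B') = 0.
  apply/eqP; rewrite eq_le h1 andbT -h0 lerDl mulr_ge0 // ltW //.
have hz2 : bf A w w = 0.
  move: h0; rewrite hz1 add0r => /eqP; rewrite mulf_eq0 invr_eq0 gt_eqF //= => /eqP //.
rewrite h2 // add0r mulmxA (psd_ker hA hz2) mul0mx scaler0 //.
Qed.

Lemma psd_tr k (A B : 'M[F]_k) : psd A -> psd B ->
  0 <= \tr (A *m B) /\ (\tr (A *m B) = 0 -> A *m B = 0).
Proof. by move=> hA hB; exact: (psd_tr_aux (leqnn _) hB hA). Qed.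

Lemma psd_conj k a (Z : 'M[F]_(a,k)) B : psd B -> psd (Z *m B *m Z^T).
Proof.
move=> [hs hq]; split; first by rewrite !trmx_mul trmxK hs mulmxA.
move=> y; have := hq (Z^T *m y); rewrite trmx_mul trmxK !mulmxA //.
Qed.

Lemma compress k a (X : 'M[F]_(a,k)) L (A : 'M_k) : X *m L = 1%:M -> (A <= X)%MS ->
  psd A -> A = X^T *m (L^T *m A *m L) *m X /\ psd (L^T *m A *m L).
Proof.
move=> hXL /submxP [D hD] hA; split; last first.
  by have := psd_conj L^T hA; rewrite trmxK.
have h1 : A *m L *m X = A by rewrite hD -(mulmxA D) hXL mulmx1.
have [hs _] := hA.
by rewrite -!mulmxA (mulmxA A) h1 mulmxA -trmx_mul -{2}hs -trmx_mul mulmxA h1 hs.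
Qed.

Lemma fact_left p q k a (M : 'M[F]_(p,q)) (A : 'I_p -> 'M_k) (B : 'I_q -> 'M_k)
  (X : 'M_(a,k)) L :
  (forall i, psd (A i)) -> (forall j, psd (B j)) -> (forall i j, M i j = \tr (A i *m B j)) ->
  X *m L = 1%:M -> (forall i, (A i <= X)%MS) -> has_psd_fact M a.
Proof.
move=> hA hB hM hXL hsub.
exists (fun i => L^T *m A i *m L), (fun j => X *m B j *m X^T).
split; first by move=> i; case: (compress hXL (hsub i) (hA i)).
split; first by move=> j; exact: psd_conj.
move=> i j; rewrite hM; have [e _] := compress hXL (hsub i) (hA i).
by rewrite {1}e -!mulmxA mxtrace_mulC !mulmxA.
Qed.

Lemma fact_right p q k b (M : 'M[F]_(p,q)) (A : 'I_p -> 'M_k) (B : 'I_q -> 'M_k)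
  (Y : 'M_(b,k)) L :
  (forall i, psd (A i)) -> (forall j, psd (B j)) -> (forall i j, M i j = \tr (A i *m B j)) ->
  Y *m L = 1%:M -> (forall j, (B j <= Y)%MS) -> has_psd_fact M b.
Proof.
move=> hA hB hM hYL hsub.
exists (fun i => Y *m A i *m Y^T), (fun j => L^T *m B j *m L).
split; first by move=> i; exact: psd_conj.
split; first by move=> j; case: (compress hYL (hsub j) (hB j)).
move=> i j; rewrite hM; have [e _] := compress hYL (hsub j) (hB j).
by rewrite {1}e !mulmxA mxtrace_mulC !mulmxA.
Qed.

Lemma psd0 k : psd (0 : 'M[F]_k).
Proof. by split; [rewrite trmx0 | move=> x; rewrite mulmx0 mul0mx mxE]. Qed.

Lemma psd_block k1 k2 (X : 'M[F]_k1) (Y : 'M[F]_k2) :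
  psd X -> psd Y -> psd (block_mx X 0 0 Y).
Proof.
move=> [hX qX] [hY qY]; split; first by rewrite tr_block_mx !trmx0 hX hY.
move=> x; rewrite -[x](vsubmxK x) tr_col_mx mul_row_block mul_row_col.
rewrite !mulmx0 addr0 add0r entryD.
by rewrite addr_ge0.
Qed.

Lemma tr_block k1 k2 (a c : 'M[F]_k1) (b d : 'M[F]_k2) :
  \tr (block_mx a 0 0 b *m block_mx c 0 0 d) = \tr (a *m c) + \tr (b *m d).
Proof.
by rewrite mulmx_block !mulmx0 !mul0mx !addr0 !add0r mxtrace_block.
Qed.
End PSD.

Unset Implicit Arguments. Set Strict Implicit.

Theorem theorem2p7 (F : rcfType) (p1 p2 q1 q2 : nat)
    (P : 'M[F]_(p1, q1)) (Q : 'M[F]_(p2, q1)) (R : 'M[F]_(p2, q2))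
    (rP rR rM : nat) :
  nonneg_mx P -> nonneg_mx Q -> nonneg_mx R ->
  is_psd_rank P rP -> is_psd_rank R rR ->
  is_psd_rank (block_mx P 0 Q R) rM ->
  (rP + rR <= rM)%N /\ (Q = 0 -> rM = (rP + rR)%N).
Proof.
move=> _ _ _ [hPf hPm] [hRf hRm] [hMf hMm].
have part1 : (rP + rR <= rM)%N.
  have [A [B [hA [hB hAB]]]] := hMf.
  have horth : forall i j, A (lshift p2 i) *m B (rshift q1 j) = 0.
    move=> i j; apply: (psd_tr (hA _) (hB _)).2.
    by rewrite -hAB block_mxEur mxE.
  pose SU := (\sum_(i < p1) A (lshift p2 i))%MS.
  pose SV := (\sum_(j < q2) B (rshift q1 j))%MS.
  have hSV : forall i, (SV <= kermx (A (lshift p2 i))^T)%MS.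
    move=> i; apply/sumsmx_subP => j _; apply/sub_kermxP.
    have [hs _] := hA (lshift p2 i); have [hs' _] := hB (rshift q1 j).
    by rewrite -hs' -trmx_mul horth trmx0.
  have hSU : (SU <= kermx SV^T)%MS.
    apply/sumsmx_subP => i _; apply/sub_kermxP.
    have := hSV i => /sub_kermxP h.
    by rewrite -[A _]trmxK -trmx_mul h trmx0.
  have hr : (\rank SU <= rM - \rank SV)%N.
    by rewrite -(mxrank_tr SV) -mxrank_ker mxrankS.
  have hrV : (\rank SV <= rM)%N by exact: rank_leq_row.
  have [L hL] := row_freeP (row_base_free SU).
  have fP : has_psd_fact P (\rank SU).
    apply: (fact_left (A := fun i => A (lshift p2 i)) (B := fun j => B (lshift q2 j))
                      (X := row_base SU) (L := L)) => //.
      by move=> i j; rewrite -hAB block_mxEul.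
    by move=> i; rewrite eq_row_base; exact: (sumsmx_sup i).
  have [L' hL'] := row_freeP (row_base_free SV).
  have fR : has_psd_fact R (\rank SV).
    apply: (fact_right (A := fun i => A (rshift p1 i)) (B := fun j => B (rshift q1 j))
                      (Y := row_base SV) (L := L')) => //.
      by move=> i j; rewrite -hAB block_mxEdr.
    by move=> j; rewrite eq_row_base; exact: (sumsmx_sup j).
  have := hPm _ fP; have := hRm _ fR; lia.
split => // hQ; subst Q.
apply/eqP; rewrite eqn_leq part1 andbT; apply: hMm.
have [A1 [B1 [hA1 [hB1 h1]]]] := hPf.
have [A2 [B2 [hA2 [hB2 h2]]]] := hRf.
exists (fun i => match split i with
                 | inl i1 => block_mx (A1 i1) 0 0 (0 : 'M_rR)
                 | inr i2 => block_mx (0 : 'M_rP) 0 0 (A2 i2) end).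
exists (fun j => match split j with
                 | inl j1 => block_mx (B1 j1) 0 0 (0 : 'M_rR)
                 | inr j2 => block_mx (0 : 'M_rP) 0 0 (B2 j2) end).
split.
  by move=> i; case: split => i'; apply: psd_block => //; exact: psd0.
split.
  by move=> j; case: split => j'; apply: psd_block => //; exact: psd0.
move=> i j.
case: split_ordP => i' ->; case: split_ordP => j' ->;
  rewrite tr_block ?mulmx0 ?mul0mx ?mxtrace0 ?addr0 ?add0r.
- by rewrite block_mxEul h1.
- by rewrite block_mxEur mxE.
- by rewrite block_mxEdl mxE.
- by rewrite block_mxEdr h2.
Qed.
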